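(* For every $t\in\mathbb Q_{\ge0}\cup\{\infty\}$, there exist a word $w$ and a letter $\alpha\in\{x,y,z\}$ such that $\omega_t=w\alpha w^{-1}$ (as words).
   Context: Modified lattice: the planar graph with vertex set $\mathbb Z^2$ whose edges are the horizontal unit segments $[(i,j),(i+1,j)]$, the vertical unit segments $[(i,j),(i,j+1)]$, and the diagonal segments of slope $-1$ joining $(i,j+1)$ and $(i+1,j)$. Words $\omega_t$: set $\omega_{0/1}=x$, $\omega_{1/0}=z$ ($\frac10$ represents $\infty$). For a reduced fraction $t=p/q\in(0,\infty)$, let $L_t$ be the segment from $(0,0)$ to $(q,p)$, oriented from $(0,0)$ to $(q,p)$. List the edges of the modified lattice whose relative interior meets $L_t$, in the order of the intersection points along $L_t$. A horizontal (resp. diagonal, vertical) edge contributes the letter $x$ (resp. $y$, $z$) if the midpoint of the edge is not on the right-hand side of the oriented segment $L_t$ (including the case that the midpoint lies on $L_t$), and contributes $x^{-1}$ (resp. $y^{-1}$, $z^{-1}$) if the midpoint is on the right-hand side. The word $\omega_t$ is the concatenation of these letters in order. *)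

(* Defs.v *)
From mathcomp Require Import all_boot all_order all_algebra.
Set Implicit Arguments. Unset Strict Implicit. Unset Printing Implicit Defensive.
Import Order.TTheory GRing.Theory Num.Theory.
Local Open Scope ring_scope.

(* Generators x, y, z; a letter is a generator with an exponent sign
   (true = exponent +1, false = exponent -1); a word is a finite sequence
   of letters (NOT reduced). *)
Inductive gen := gx | gy | gz.
Definition letter := (gen * bool)%type.
Definition word := seq letter.
Definition inv_letter (a : letter) : letter := (a.1, ~~ a.2).
Definition inv_word (w : word) : word := rev (map inv_letter w).

(* The oriented segment L is from (0,0) to (Q,P).  A point (mx,my) is on
   the right-hand side of L iff Q*my - P*mx < 0.  The sign is "true"
   (positive letter) iff the midpoint is NOT on the right-hand side. *)
Definition side_sign (P Q mx my : rat) : bool := 0 <= Q * my - P * mx.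

(* Each candidate edge is tested for meeting L in its relative interior;
   if it does, we return the parameter u in [0,1] of the intersection point
   (Q u, P u) on L, together with the contributed letter. *)

(* horizontal edge [(i,j),(i+1,j)] : intersection at height j *)
Definition hcand (P Q : rat) (i j : nat) : option (rat * letter) :=
  let u := j%:R / P in
  let X := Q * u in
  if (0 <= u <= 1) && (i%:R < X < i%:R + 1)
  then Some (u, (gx, side_sign P Q (i%:R + 1/2) j%:R)) else None.

(* vertical edge [(i,j),(i,j+1)] : intersection at abscissa i *)
Definition vcand (P Q : rat) (i j : nat) : option (rat * letter) :=
  let u := i%:R / Q in
  let Y := P * u in
  if (0 <= u <= 1) && (j%:R < Y < j%:R + 1)
  then Some (u, (gz, side_sign P Q i%:R (j%:R + 1/2))) else None.

(* diagonal edge [(i,j+1),(i+1,j)] : on the line X + Y = i + j + 1 *)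
Definition dcand (P Q : rat) (i j : nat) : option (rat * letter) :=
  let u := (i%:R + j%:R + 1) / (P + Q) in
  let X := Q * u in
  if (0 <= u <= 1) && (i%:R < X < i%:R + 1)
  then Some (u, (gy, side_sign P Q (i%:R + 1/2) (j%:R + 1/2))) else None.

(* Only edges with lower-left index
   (i,j) in [0,q]x[0,p] are enumerated: every edge whose relative interior
   meets L lies in the bounding box [0,q]x[0,p], so this loses nothing.
   The intersected edges are sorted along L by their parameter u (the
   relative interiors of distinct edges are disjoint, so u is injective). *)
Definition omega_pq (p q : nat) : word :=
  let P : rat := p%:R in
  let Q : rat := q%:R in
  let cs := pmap id (flatten [seq [:: hcand P Q i j; vcand P Q i j; dcand P Q i j]
                                | i <- iota 0 q.+1, j <- iota 0 p.+1]) in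
  map snd (sort (fun a b : rat * letter => a.1 <= b.1) cs).

(* t in Q_{>=0} \cup {oo}: None stands for oo = 1/0. *)
Definition omega (t : option rat) : word :=
  match t with
  | None => [:: (gz, true)]
  | Some r => if r == 0 then [:: (gx, true)]
              else omega_pq (absz (numq r)) (absz (denq r))
  end.

(* Main.v *)
Require Import Defs.
From HB Require Import structures.
From mathcomp Require Import all_boot all_order all_algebra.
From mathcomp Require Import zify ring lra.
Import Order.TTheory GRing.Theory Num.Theory.
Set Implicit Arguments. Unset Strict Implicit.

Lemma lt_of_mul (a b c : nat) : a * c < b * c -> a < b.
Proof. by rewrite ltn_mul2r => /andP[]. Qed.

Lemma iv_uniq (a b c m : nat) : a * c < m -> m < a * c + c -> b * c < m -> m < b * c + c -> a = b.
Proof.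
move=> h1 h2 h3 h4.
have e1 : a < b.+1 by apply: (@lt_of_mul _ _ c); rewrite mulSn; lia.
have e2 : b < a.+1 by apply: (@lt_of_mul _ _ c); rewrite mulSn; lia.
lia.
Qed.

Lemma no_int (a b c : nat) : a * c < b * c -> b * c < a * c + c -> False.
Proof.
move=> h1 h2.
have e1 : a < b by apply: (@lt_of_mul _ _ c).
have e2 : b < a.+1 by apply: (@lt_of_mul _ _ c); rewrite mulSn; lia.
lia.
Qed.

Definition hC p q i j := (j <= p) && (i * p < q * j < i * p + p).
Definition vC p q i j := (i <= q) && (j * q < p * i < j * q + q).
Definition dC p q i j := (i + j + 1 <= p + q) && (i * (p + q) < q * (i + j + 1) < i * (p + q) + (p + q)).
Definition hS p q i j := p * (2 * i + 1) <= 2 * q * j.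
Definition vS p q i j := 2 * p * i <= q * (2 * j + 1).
Definition dS p q i j := p * (2 * i + 1) <= q * (2 * j + 1).

Lemma hC_lt p q i j : 0 < p -> hC p q i j -> (i < q) /\ (0 < j).
Proof.
move=> p0 /andP[h1 /andP[h2 h3]]; split.
  apply: (@lt_of_mul _ _ p). have : q * j <= q * p by rewrite leq_mul2l h1 orbT. lia.
by case: j h2 {h1 h3} => //; rewrite muln0.
Qed.

Lemma vC_lt p q i j : 0 < q -> vC p q i j -> (j < p) /\ (0 < i).
Proof.
move=> q0 /andP[h1 /andP[h2 h3]]; split.
  apply: (@lt_of_mul _ _ q). have : p * i <= p * q by rewrite leq_mul2l h1 orbT. lia.
by case: i h2 {h1 h3} => //; rewrite muln0.
Qed.

Lemma dC_lt p q i j : 0 < p -> 0 < q -> dC p q i j -> (i < q) /\ (j < p).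
Proof.
move=> p0 q0 /andP[h1 /andP[h2 h3]]; split.
  apply: (@lt_of_mul _ _ (p + q)). have : q * (i + j + 1) <= q * (p + q) by rewrite leq_mul2l h1 orbT. lia.
apply: (@lt_of_mul _ _ (p + q)). have : p * (i + j + 1) <= p * (p + q) by rewrite leq_mul2l h1 orbT.
lia.
Qed.

Lemma hsym p q i j : 0 < p -> 0 < q -> coprime p q -> hC p q i j ->
  hC p q (q - 1 - i) (p - j) /\
  hS p q (q - 1 - i) (p - j) = (if 2 * j == p then hS p q i j else ~~ hS p q i j).
Proof.
move=> p0 q0 cop hc; have cop' : coprime q p by rewrite coprime_sym.
have [iq j0] := hC_lt p0 hc.
move: hc; rewrite /hC /hS => /andP[h1 /andP[h2 h3]].
split.
  apply/andP; split; first lia.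
  apply/andP; split.
    have -> : q * (p - j) = q * p - q * j by rewrite mulnBr.
    have -> : (q - 1 - i) * p = q * p - i * p - p by rewrite !mulnBl; lia.
    have : q * j <= q * p by rewrite leq_mul2l h1 orbT.
    have : p + i * p <= q * p by rewrite -mulSn leq_mul2r iq orbT.
    lia.
  have -> : q * (p - j) = q * p - q * j by rewrite mulnBr.
  have -> : (q - 1 - i) * p = q * p - i * p - p by rewrite !mulnBl; lia.
  have : q * j <= q * p by rewrite leq_mul2l h1 orbT.
  have : p + i * p <= q * p by rewrite -mulSn leq_mul2r iq orbT.
  lia.
have e1 : p * (2 * (q - 1 - i) + 1) = 2 * q * p - p * (2 * i + 1).
  have -> : 2 * (q - 1 - i) + 1 = 2 * q - (2 * i + 1) by lia.
  by rewrite mulnBr [p * (2 * q)]mulnC.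
have e2 : 2 * q * (p - j) = 2 * q * p - 2 * q * j by rewrite mulnBr.
have b1 : q * j <= q * p by rewrite leq_mul2l h1 orbT.
have b2 : p + i * p <= q * p by rewrite -mulSn leq_mul2r iq orbT.
rewrite e1 e2.
case: eqP => [pj|pj].
  have : 2 * i < q by apply: (@lt_of_mul _ _ j); lia.
  have : q < 2 * i + 2 by apply: (@lt_of_mul _ _ j); lia.
  move=> a1 a2; have -> : q = 2 * i + 1 by lia.
  have -> : p * (2 * i + 1) = 2 * (2 * i + 1) * j by lia.
  by rewrite !leqnn.
have ne : 2 * q * j != p * (2 * i + 1).
  apply/eqP => E.
  have : p %| 2 * j.
    by rewrite -(Gauss_dvdr _ cop) mulnA [q * 2]mulnC E dvdn_mulr.
  case/dvdnP => k Ek.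
  have : k < 3 by apply: (@lt_of_mul _ _ p); lia.
  case: k Ek => [|[|[|k]]] Ek //; try lia.
apply/idP/idP; lia.
Qed.

Lemma vsym p q i j : 0 < p -> 0 < q -> coprime p q -> vC p q i j ->
  vC p q (q - i) (p - 1 - j) /\
  vS p q (q - i) (p - 1 - j) = (if 2 * i == q then vS p q i j else ~~ vS p q i j).
Proof.
move=> p0 q0 cop hc; have cop' : coprime q p by rewrite coprime_sym.
have [jp i0] := vC_lt q0 hc.
move: hc; rewrite /vC /vS => /andP[h1 /andP[h2 h3]].
have b1 : p * i <= p * q by rewrite leq_mul2l h1 orbT.
have b2 : q + j * q <= p * q by rewrite -mulSn leq_mul2r jp orbT.
have ea : p * (q - i) = p * q - p * i by rewrite mulnBr.
have eb : (p - 1 - j) * q = p * q - q - j * q by rewrite !mulnBl; lia.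
split.
  apply/andP; split; first lia.
  rewrite ea eb; apply/andP; split; lia.
have e1 : 2 * p * (q - i) = 2 * p * q - 2 * p * i by rewrite mulnBr.
have e2 : q * (2 * (p - 1 - j) + 1) = 2 * p * q - q * (2 * j + 1).
  have -> : 2 * (p - 1 - j) + 1 = 2 * p - (2 * j + 1) by lia.
  by rewrite mulnBr [q * (2 * p)]mulnC.
rewrite e1 e2.
case: eqP => [qi|qi].
  have : 2 * j < p by apply: (@lt_of_mul _ _ i); lia.
  have : p < 2 * j + 2 by apply: (@lt_of_mul _ _ i); lia.
  move=> a1 a2; have -> : p = 2 * j + 1 by lia.
  have -> : q * (2 * j + 1) = 2 * (2 * j + 1) * i by lia.
  by rewrite !leqnn.
have ne : 2 * p * i != q * (2 * j + 1).
  apply/eqP => E.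
  have : q %| 2 * i.
    by rewrite -(Gauss_dvdr _ cop') mulnA [p * 2]mulnC E dvdn_mulr.
  case/dvdnP => k Ek.
  have : k < 3 by apply: (@lt_of_mul _ _ q); lia.
  case: k Ek => [|[|[|k]]] Ek //; try lia.
apply/idP/idP; lia.
Qed.

Lemma dsym p q i j : 0 < p -> 0 < q -> coprime p q -> dC p q i j ->
  dC p q (q - 1 - i) (p - 1 - j) /\ (q - 1 - i) + (p - 1 - j) + 1 = p + q - (i + j + 1) /\
  dS p q (q - 1 - i) (p - 1 - j) = (if 2 * (i + j + 1) == p + q then dS p q i j else ~~ dS p q i j).
Proof.
move=> p0 q0 cop hc; have cop' : coprime q p by rewrite coprime_sym.
have [iq jp] := dC_lt p0 q0 hc.
move: hc; rewrite /dC /dS => /andP[h1 /andP[h2 h3]].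
have b1 : q * (i + j + 1) <= q * (p + q) by rewrite leq_mul2l h1 orbT.
have b2 : (p + q) + i * (p + q) <= q * (p + q) by rewrite -mulSn leq_mul2r iq orbT.
have ea : q * ((q - 1 - i) + (p - 1 - j) + 1) = q * (p + q) - q * (i + j + 1).
  have -> : (q - 1 - i) + (p - 1 - j) + 1 = (p + q) - (i + j + 1) by lia.
  by rewrite mulnBr.
have eb : (q - 1 - i) * (p + q) = q * (p + q) - i * (p + q) - (p + q) by rewrite !mulnBl; lia.
split.
  apply/andP; split; first lia.
  rewrite ea eb; apply/andP; split; lia.
split; first lia.
have e1 : p * (2 * (q - 1 - i) + 1) = 2 * p * q - p * (2 * i + 1).
  have -> : 2 * (q - 1 - i) + 1 = 2 * q - (2 * i + 1) by lia.
  by rewrite mulnBr mulnA [p * 2]mulnC.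
have e2 : q * (2 * (p - 1 - j) + 1) = 2 * p * q - q * (2 * j + 1).
  have -> : 2 * (p - 1 - j) + 1 = 2 * p - (2 * j + 1) by lia.
  by rewrite mulnBr [q * (2 * p)]mulnC.
have c1 : p * (2 * i + 1) <= 2 * p * q.
  by rewrite [2 * p]mulnC -mulnA leq_mul2l; apply/orP; right; lia.
have c2 : q * (2 * j + 1) <= 2 * p * q.
  by rewrite [2 * p * q]mulnC leq_mul2l; apply/orP; right; lia.
rewrite e1 e2.
case: eqP => [qi|qi].
  have : 2 * i < q by apply: (@lt_of_mul _ _ (p + q)); lia.
  have : q < 2 * i + 2 by apply: (@lt_of_mul _ _ (p + q)); lia.
  move=> a1 a2; have qe : q = 2 * i + 1 by lia.
  have pe : p = 2 * j + 1 by lia.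
  have -> : p * (2 * i + 1) = q * (2 * j + 1) by rewrite -qe -pe mulnC.
  by rewrite !leqnn.
have ne : p * (2 * i + 1) != q * (2 * j + 1).
  apply/eqP => E.
  have : q %| 2 * i + 1.
    by rewrite -(Gauss_dvdr _ cop') E dvdn_mulr.
  case/dvdnP => k Ek.
  have : k < 2 by apply: (@lt_of_mul _ _ q); lia.
  case: k Ek => [|[|k]] Ek //; try lia.
  have qe : q = 2 * i + 1 by lia.
  have pe : p = 2 * j + 1.
    have : p * q = (2 * j + 1) * q by rewrite {1}qe E mulnC.
    by move/eqP; rewrite eqn_pmul2r // => /eqP.
  lia.
apply/idP/idP; lia.
Qed.

Lemma hh p q i j i' j' : hC p q i j -> hC p q i' j' -> j = j' -> i = i'.
Proof.
rewrite /hC => /andP[_ /andP[h1 h2]] /andP[_ /andP[h3 h4]] e; subst j'.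
exact: (@iv_uniq i i' p (q * j)).
Qed.

Lemma vv p q i j i' j' : vC p q i j -> vC p q i' j' -> i = i' -> j = j'.
Proof.
rewrite /vC => /andP[_ /andP[h1 h2]] /andP[_ /andP[h3 h4]] e; subst i'.
exact: (@iv_uniq j j' q (p * i)).
Qed.

Lemma dd p q i j i' j' : dC p q i j -> dC p q i' j' -> i + j + 1 = i' + j' + 1 -> i = i' /\ j = j'.
Proof.
rewrite /dC => /andP[_ /andP[h1 h2]] /andP[_ /andP[h3 h4]] e.
have ii : i = i'. rewrite e in h1 h2. exact: (@iv_uniq i i' (p + q) (q * (i' + j' + 1))).
split=> //; lia.
Qed.

Lemma hv p q i j i' j' : hC p q i j -> vC p q i' j' -> j * q = i' * p -> False.
Proof.
rewrite /hC => /andP[_ /andP[h1 h2]] _ e.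
apply: (@no_int i i' p); rewrite -e [j * q]mulnC //.
Qed.

Lemma hd p q i j i' j' : hC p q i j -> dC p q i' j' -> j * (p + q) = (i' + j' + 1) * p -> False.
Proof.
rewrite /hC => /andP[_ /andP[h1 h2]] _ e.
have e2 : q * j = (i' + j' + 1 - j) * p.
  rewrite mulnBl -e mulnDr; lia.
apply: (@no_int i (i' + j' + 1 - j) p); rewrite -e2 //.
Qed.

Lemma vd p q i j i' j' : vC p q i j -> dC p q i' j' -> i * (p + q) = (i' + j' + 1) * q -> False.
Proof.
rewrite /dC => _ /andP[_ /andP[h1 h2]] e.
apply: (@no_int i' i (p + q)); rewrite e [_ * q]mulnC //.
Qed.

Lemma center p q : 0 < p -> 0 < q -> coprime p q -> exists i j,
  [&& hC p q i j, 2 * j == p & hS p q i j] \/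
  [&& vC p q i j, 2 * i == q & vS p q i j] \/
  [&& dC p q i j, 2 * (i + j + 1) == p + q & dS p q i j].
Proof.
move=> p0 q0 cop.
have ep := odd_double_half p; have eqq := odd_double_half q.
rewrite -!muln2 in ep eqq.
set a := p./2 in ep *; set b := q./2 in eqq *.
case op: (odd p) ep => /= ep; case oq: (odd q) eqq => /= eqq.
- exists b, a; right; right.
  rewrite /dC /dS -ep -eqq; apply/and3P; split; try (apply/andP; split); try (apply/andP; split); try (apply/eqP); nia.
- exists b, a; right; left.
  rewrite /vC /vS -ep -eqq; apply/and3P; split; try (apply/andP; split); try (apply/andP; split); try (apply/eqP); nia.
- exists b, a; left.
  rewrite /hC /hS -ep -eqq; apply/and3P; split; try (apply/andP; split); try (apply/andP; split); try (apply/eqP); nia.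
- exfalso; move: cop; rewrite /coprime.
  have : 2 %| gcdn p q by rewrite dvdn_gcd -ep -eqq !dvdn_mull.
  move/eqP => g; move=> /eqP g1; rewrite g1 in g. done.
Qed.

Local Open Scope ring_scope.
Ltac pg := match goal with |- ?g => idtac g end.

Definition gen_eqb (a b : gen) : bool :=
  match a, b with gx, gx | gy, gy | gz, gz => true | _, _ => false end.
Lemma gen_eqP : Equality.axiom gen_eqb.
Proof. by case; case; constructor. Qed.
HB.instance Definition _ := hasDecEq.Build gen gen_eqP.

Lemma ltrn (a b : nat) : (a%:R < b%:R :> rat) = (a < b)%N.
Proof. by rewrite ltr_nat. Qed.
Lemma lern (a b : nat) : (a%:R <= b%:R :> rat) = (a <= b)%N.
Proof. by rewrite ler_nat. Qed.

Lemma hcandE (p q i j : nat) : (0 < p)%N ->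
  hcand p%:R q%:R i j = if ((j <= p) && (i * p < q * j < i * p + p))%N
     then Some (j%:R / p%:R, (gx, (p * (2 * i + 1) <= 2 * q * j)%N)) else None.
Proof.
move=> p0; rewrite /hcand.
have P0 : (0 : rat) < p%:R by rewrite ltr0n.
have -> : (0 <= (j%:R / p%:R : rat) <= 1) = (j <= p)%N.
  have -> : 0 <= (j%:R / p%:R : rat) by apply: divr_ge0.
  by rewrite /= ler_pdivrMr // mul1r lern.
have -> : (i%:R < (q%:R * (j%:R / p%:R) : rat) < i%:R + 1) = (i * p < q * j < i * p + p)%N.
  rewrite mulrA ltr_pdivlMr // ltr_pdivrMr // natr1 -!natrM.
  by rewrite !ltrn; apply/idP/idP => /andP[h1 h2]; apply/andP; split; lia.
congr (if _ then Some (_, (_, _)) else None).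
rewrite /side_sign subr_ge0.
have -> : p%:R * (i%:R + 1 / 2) = (p * (2 * i + 1))%:R / 2 :> rat.
  by rewrite natrM natrD natrM; field.
by rewrite ler_pdivrMr // -[2 : rat]/(2%:R) -!natrM lern; congr (_ <= _)%N; lia.
Qed.

Lemma vcandE (p q i j : nat) : (0 < q)%N ->
  vcand p%:R q%:R i j = if ((i <= q) && (j * q < p * i < j * q + q))%N
     then Some (i%:R / q%:R, (gz, (2 * p * i <= q * (2 * j + 1))%N)) else None.
Proof.
move=> q0; rewrite /vcand.
have Q0 : (0 : rat) < q%:R by rewrite ltr0n.
have -> : (0 <= (i%:R / q%:R : rat) <= 1) = (i <= q)%N.
  have -> : 0 <= (i%:R / q%:R : rat) by apply: divr_ge0.
  by rewrite /= ler_pdivrMr // mul1r lern.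
have -> : (j%:R < (p%:R * (i%:R / q%:R) : rat) < j%:R + 1) = (j * q < p * i < j * q + q)%N.
  rewrite mulrA ltr_pdivlMr // ltr_pdivrMr // natr1 -!natrM.
  by rewrite !ltrn; apply/idP/idP => /andP[h1 h2]; apply/andP; split; lia.
congr (if _ then Some (_, (_, _)) else None).
rewrite /side_sign subr_ge0.
have -> : q%:R * (j%:R + 1 / 2) = (q * (2 * j + 1))%:R / 2 :> rat.
  by rewrite natrM natrD natrM; field.
by rewrite ler_pdivlMr // -[2 : rat]/(2%:R) -!natrM lern; congr (_ <= _)%N; lia.
Qed.

Lemma dcandE (p q i j : nat) : (0 < p)%N -> (0 < q)%N ->
  dcand p%:R q%:R i j = if ((i + j + 1 <= p + q) && (i * (p + q) < q * (i + j + 1) < i * (p + q) + (p + q)))%N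
     then Some ((i + j + 1)%:R / (p + q)%:R, (gy, (p * (2 * i + 1) <= q * (2 * j + 1))%N)) else None.
Proof.
move=> p0 q0; rewrite /dcand.
have PQ0 : (0 : rat) < (p + q)%:R by rewrite ltr0n addn_gt0 p0.
have -> : (i%:R + j%:R + 1 : rat) = (i + j + 1)%:R by rewrite !natrD.
have -> : (p%:R + q%:R : rat) = (p + q)%:R by rewrite !natrD.
have -> : (0 <= ((i + j + 1)%:R / (p + q)%:R : rat) <= 1) = (i + j + 1 <= p + q)%N.
  have -> : 0 <= ((i + j + 1)%:R / (p + q)%:R : rat) by apply: divr_ge0.
  by rewrite /= ler_pdivrMr // mul1r lern.
have -> : (i%:R < (q%:R * ((i + j + 1)%:R / (p + q)%:R) : rat) < i%:R + 1) = (i * (p + q) < q * (i + j + 1) < i * (p + q) + (p + q))%N.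
  rewrite mulrA ltr_pdivlMr // ltr_pdivrMr // natr1 -!natrM.
  by rewrite !ltrn; apply/idP/idP => /andP[h1 h2]; apply/andP; split; lia.
congr (if _ then Some (_, (_, _)) else None).
rewrite /side_sign subr_ge0.
have -> : q%:R * (j%:R + 1 / 2) = (q * (2 * j + 1))%:R / 2 :> rat.
  by rewrite natrM natrD natrM; field.
have -> : p%:R * (i%:R + 1 / 2) = (p * (2 * i + 1))%:R / 2 :> rat.
  by rewrite natrM natrD natrM; field.
by rewrite ler_pdivlMr // divfK // lern.
Qed.

Definition g (x : rat * letter) : rat * letter :=
  (1 - x.1, (x.2.1, if x.1 == 1/2 then x.2.2 else ~~ x.2.2)).

Lemma gK : involutive g.
Proof.
case=> u [a b]; rewrite /g /=.
have -> : (1 - u == 1/2) = (u == 1/2) by apply/eqP/eqP => h; lra.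
rewrite opprB addrC subrK; case: (u == 1/2) => //=; by rewrite negbK.
Qed.

Lemma half_eq (a b : nat) : (0 < b)%N -> (a%:R / b%:R == 1/2 :> rat) = (2 * a == b)%N.
Proof.
move=> b0; rewrite eqr_div; last 2 first. - by rewrite pnatr_eq0 -lt0n. - by [].
by rewrite mul1r -natrM eqr_nat mulnC.
Qed.

Lemma div_eq (a b c d : nat) : (0 < b)%N -> (0 < d)%N ->
  (a%:R / b%:R == c%:R / d%:R :> rat) = (a * d == c * b)%N.
Proof.
move=> b0 d0; rewrite eqr_div ?pnatr_eq0 -?lt0n //.
by rewrite -!natrM eqr_nat.
Qed.

Definition Lf (p q : nat) (ij : nat * nat) : seq (option (rat * letter)) :=
  [:: hcand p%:R q%:R ij.1 ij.2; vcand p%:R q%:R ij.1 ij.2; dcand p%:R q%:R ij.1 ij.2].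

Definition cs (p q : nat) := pmap id (flatten (map (Lf p q) [seq (i, j) | i <- iota 0 q.+1, j <- iota 0 p.+1])).

Lemma omega_pqE p q : omega_pq p q = map snd (sort (fun a b : rat * letter => a.1 <= b.1) (cs p q)).
Proof. by rewrite /omega_pq /cs map_allpairs. Qed.

Definition inCij p q i j (x : rat * letter) :=
  (hC p q i j /\ x = (j%:R / p%:R, (gx, hS p q i j))) \/
  (vC p q i j /\ x = (i%:R / q%:R, (gz, vS p q i j))) \/
  (dC p q i j /\ x = ((i + j + 1)%:R / (p + q)%:R, (gy, dS p q i j))).

Lemma LfP p q i j x : (0 < p)%N -> (0 < q)%N -> Some x \in Lf p q (i, j) -> inCij p q i j x.
Proof.
move=> p0 q0; rewrite /Lf /= hcandE // vcandE // dcandE // !inE.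
rewrite /inCij.
case/orP => [|/orP[]] /eqP; case: ifP => H; try discriminate; case => <-;
  by [left | right; left | right; right].
Qed.

Lemma cs_inC p q x : (0 < p)%N -> (0 < q)%N -> x \in cs p q -> exists i j, inCij p q i j x.
Proof.
move=> p0 q0; rewrite mem_pmap map_id => /flattenP [l /mapP [[i j] _ ->] H].
by exists i, j; apply: LfP.
Qed.

Lemma inC_range p q i j x : (0 < p)%N -> (0 < q)%N -> inCij p q i j x -> (i <= q)%N /\ (j <= p)%N.
Proof.
move=> p0 q0 [[H _]|[[H _]|[H _]]].
- have := hC_lt p0 H; move: H => /andP[]; lia.
- have := vC_lt q0 H; move: H => /andP[]; lia.
- have := dC_lt p0 q0 H; lia.
Qed.

Lemma inC_Lf p q i j x : (0 < p)%N -> (0 < q)%N -> inCij p q i j x -> Some x \in Lf p q (i, j).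
Proof.
move=> p0 q0; rewrite /Lf /= hcandE // vcandE // dcandE // !inE.
move=> [[H ->]|[[H ->]|[H ->]]]; move: H.
- by rewrite /hC => ->; rewrite eqxx.
- by rewrite /vC => ->; rewrite eqxx !orbT.
- by rewrite /dC => ->; rewrite eqxx !orbT.
Qed.

Lemma inC_cs p q i j x : (0 < p)%N -> (0 < q)%N -> inCij p q i j x -> x \in cs p q.
Proof.
move=> p0 q0 H; have [iq jp] := inC_range p0 q0 H.
rewrite mem_pmap map_id; apply/flattenP; exists (Lf p q (i, j)); last exact: inC_Lf.
apply: map_f; apply/allpairsP; exists (i, j); rewrite !mem_iota /=; split => //; lia.
Qed.

Lemma inC_g p q i j x : (0 < p)%N -> (0 < q)%N -> coprime p q -> inCij p q i j x ->
  exists i' j', inCij p q i' j' (g x).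
Proof.
move=> p0 q0 cop [[H ->]|[[H ->]|[H ->]]].
- have [H' S'] := hsym p0 q0 cop H.
  exists (q - 1 - i)%N, (p - j)%N; left; split => //.
  rewrite /g /= half_eq // S'; congr (_, (_, _)).
  have jp : (j <= p)%N by move: H => /andP[].
  rewrite natrB // mulrBl divff // pnatr_eq0 -lt0n //.
- have [H' S'] := vsym p0 q0 cop H.
  exists (q - i)%N, (p - 1 - j)%N; right; left; split => //.
  rewrite /g /= half_eq // S'; congr (_, (_, _)).
  have iq : (i <= q)%N by move: H => /andP[].
  rewrite natrB // mulrBl divff // pnatr_eq0 -lt0n //.
- have [H' [E S']] := dsym p0 q0 cop H.
  exists (q - 1 - i)%N, (p - 1 - j)%N; right; right; split => //.
  rewrite /g /= half_eq ?addn_gt0 ?p0 // S' E; congr (_, (_, _)).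
  have le : (i + j + 1 <= p + q)%N by move: H => /andP[].
  rewrite natrB // mulrBl divff // pnatr_eq0 -lt0n addn_gt0 p0 //.
Qed.

Lemma inC_inj p q i j i' j' x y : (0 < p)%N -> (0 < q)%N -> inCij p q i j x -> inCij p q i' j' y ->
  x.1 = y.1 -> (i = i' /\ j = j') /\ x = y.
Proof.
move=> p0 q0 Hx Hy.
have pq0 : (0 < p + q)%N by rewrite addn_gt0 p0.
have cancel_r : forall a b c : nat, (0 < c)%N -> (a * c = b * c)%N -> a = b.
  by move=> a b c c0 /eqP; rewrite eqn_pmul2r // => /eqP.
case: Hx => [[H1 ->]|[[H1 ->]|[H1 ->]]]; case: Hy => [[H2 ->]|[[H2 ->]|[H2 ->]]] /=;
  move=> /eqP; rewrite div_eq // => /eqP E.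
- have ej := cancel_r _ _ _ p0 E; subst j'; have ei := hh H1 H2 erefl; subst i'. by [].
- by case: (hv H1 H2 E).
- by case: (hd H1 H2 E).
- by case: (hv H2 H1 (esym E)).
- have ei := cancel_r _ _ _ q0 E; subst i'; have ej := vv H1 H2 erefl; subst j'. by [].
- by case: (vd H1 H2 E).
- by case: (hd H2 H1 (esym E)).
- by case: (vd H2 H1 (esym E)).
- have es := cancel_r _ _ _ pq0 E; have [ei ej] := dd H1 H2 es; subst i' j'. by [].
Qed.

Lemma uniq_pf (A T : eqType) (F : A -> seq (option T)) (idx : seq A) :
  uniq idx -> (forall a, uniq (pmap id (F a))) ->
  (forall a b x, Some x \in F a -> Some x \in F b -> a = b) ->
  uniq (pmap id (flatten (map F idx))).
Proof.
move=> U1 U2 inj; elim: idx U1 => [|a idx IH] //= /andP[ai ui].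
rewrite pmap_cat cat_uniq U2 IH // andbT /=.
apply/hasPn => x; rewrite mem_pmap map_id => /flattenP [l /mapP [b bi ->] xb].
rewrite mem_pmap map_id; apply/negP => xa.
by move: ai; rewrite (inj _ _ _ xa xb) bi.
Qed.

Lemma Lf_uniq p q ij : (0 < p)%N -> (0 < q)%N -> uniq (pmap id (Lf p q ij)).
Proof.
move=> p0 q0; rewrite /Lf hcandE // vcandE // dcandE //.
by case: ifP => _; case: ifP => _; case: ifP => _ //=; rewrite ?inE ?xpair_eqE //= ?andbF.
Qed.

Lemma cs_uniq p q : (0 < p)%N -> (0 < q)%N -> uniq (cs p q).
Proof.
move=> p0 q0; apply: uniq_pf.
- apply: allpairs_uniq; rewrite ?iota_uniq //.
  by move=> [a b] [c d] _ _.
- by move=> a; apply: Lf_uniq.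
- move=> [i j] [i' j'] x /(LfP p0 q0) H1 /(LfP p0 q0) H2.
  by have [[-> ->] _] := inC_inj p0 q0 H1 H2 erefl.
Qed.

Definition leu (a b : rat * letter) := a.1 <= b.1.
Definition ltu (a b : rat * letter) := a.1 < b.1.

Lemma sorted_strict (s : seq (rat * letter)) : uniq s -> sorted leu s ->
  {in s &, forall x y, x.1 = y.1 -> x = y} -> sorted ltu s.
Proof.
case: s => [|x s] //=.
elim: s x => [|y s IH] x //= /andP[xn /andP[yn us]] /andP[lxy ps] inj.
apply/andP; split.
  rewrite /ltu lt_neqAle; move: lxy; rewrite /leu => ->; rewrite andbT; apply/eqP => E.
  by move: xn; rewrite (inj x y) ?inE ?eqxx ?orbT.
apply: IH => //; first by rewrite yn us.
by move=> a b ai bi; apply: inj; rewrite inE ?ai ?bi orbT.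
Qed.

Lemma filter_split (P : pred (rat * letter)) A c B :
  all P A -> ~~ P c -> all (predC P) B -> filter P (A ++ c :: B) = A.
Proof.
move=> hA hc hB; rewrite filter_cat /= (negbTE hc).
rewrite (eq_in_filter (a2 := predT)) ?filter_predT; last by move=> x /(allP hA) ->.
rewrite (eq_in_filter (a2 := pred0)) ?filter_pred0 ?cats0 //.
by move=> x /(allP hB) /= /negbTE ->.
Qed.

Lemma sym_word (s : seq (rat * letter)) c :
  sorted ltu s -> s = map g (rev s) -> c \in s -> c.1 = 1/2 -> c.2.2 = true ->
  exists w a, map snd s = w ++ (a, true) :: inv_word w.
Proof.
move=> so E cs c1 c2.
case/splitPr: cs so E => A B so E.
have [hA hB] : all (fun x => x.1 < 1/2) A /\ all (fun x => 1/2 < x.1) B.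
  move: so; rewrite sorted_pairwise; last by move=> a b d; rewrite /ltu; apply: lt_trans.
  rewrite pairwise_cat allrel_consr /= => /andP[/andP[h1 _] /andP[_ /andP[h3 _]]].
  by split; apply/allP => x xi; [move/allP: h1 => /(_ x xi); rewrite /ltu c1 | move/allP: h3 => /(_ x xi); rewrite /ltu c1].
have gc : g c = c by case: c c1 c2 {E so} => u [a b] /= -> ->; rewrite /g /= ?eqxx; congr (_, _); lra.
have EA : A = map g (rev B).
  have nc : ~~ (fun x : rat * letter => x.1 < 1/2) c by rewrite /= c1 ltxx.
  have hB' : all (predC (fun x : rat * letter => x.1 < 1/2)) B.
    by apply/allP => x /(allP hB) /= h; rewrite -leNgt ltW.
  have hgB : all (fun x : rat * letter => x.1 < 1/2) (map g (rev B)).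
    apply/allP => x /mapP [y]; rewrite mem_rev => /(allP hB) h ->; rewrite /g /=; lra.
  have hgA : all (predC (fun x : rat * letter => x.1 < 1/2)) (map g (rev A)).
    apply/allP => x /mapP [y]; rewrite mem_rev => /(allP hA) h ->; rewrite /g /= -leNgt; lra.
  have := congr1 (filter (fun x => x.1 < 1/2)) E.
  rewrite rev_cat /= rev_cons cat_rcons map_cat /= gc.
  by rewrite (filter_split hA nc hB') (filter_split hgB nc hgA).
have EB : B = map g (rev A).
  by rewrite EA -map_rev revK -map_comp map_id_in // => x _ /=; rewrite gK.
exists (map snd A), c.2.1.
rewrite map_cat /= EB /inv_word; congr (_ ++ (_ :: _)); first by case: c {c1 gc E so} c2 => u [a b] /= ->.
rewrite !map_rev -!map_comp; apply: congr1; apply/eq_in_map => x /(allP hA) /= h.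
by rewrite /g /= /inv_letter; case: eqP => // e; rewrite e ltxx in h.
Qed.

Lemma main_pq p q : (0 < p)%N -> (0 < q)%N -> coprime p q ->
  exists w a, omega_pq p q = w ++ (a, true) :: inv_word w.
Proof.
move=> p0 q0 cop; rewrite omega_pqE.
set s := sort _ (cs p q).
have so : sorted leu s by apply: sort_sorted => a b; apply: le_total.
have us : uniq s by rewrite sort_uniq cs_uniq.
have memE : s =i cs p q by apply: mem_sort.
have inj : {in s &, forall x y, x.1 = y.1 -> x = y}.
  move=> x y; rewrite !memE => /(cs_inC p0 q0) [i [j Hx]] /(cs_inC p0 q0) [i' [j' Hy]] e.
  by have [_ ->] := inC_inj p0 q0 Hx Hy e.
have st := sorted_strict us so inj.
have closed : forall x, x \in cs p q -> g x \in cs p q.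
  move=> x /(cs_inC p0 q0) [i [j Hx]]; have [i' [j' H]] := inC_g p0 q0 cop Hx.
  exact: inC_cs H.
have E : s = map g (rev s).
  apply: (irr_sorted_eq (leT := ltu)) => //.
  - by move=> a b d; rewrite /ltu; apply: lt_trans.
  - by move=> a; rewrite /ltu ltxx.
  - rewrite sorted_map rev_sorted; apply: sub_sorted st => a b; rewrite /ltu /relpre /g /=; lra.
  - move=> x; rewrite -{2}(gK x) mem_map ?mem_rev ?memE; last exact: inv_inj gK.
    apply/idP/idP; first exact: closed.
    by move/closed; rewrite gK.
have [i [j H]] := center p0 q0 cop.
have [c [cin c1 c2]] : exists c, [/\ c \in cs p q, c.1 = 1/2 & c.2.2 = true].
  case: H => [/and3P[H e S]|[/and3P[H e S]|/and3P[H e S]]].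
  - exists (j%:R / p%:R, (gx, hS p q i j)); split => //=.
    + by apply: (@inC_cs _ _ i j); [| |left].
    + by apply/eqP; rewrite half_eq.
  - exists (i%:R / q%:R, (gz, vS p q i j)); split => //=.
    + by apply: (@inC_cs _ _ i j); [| |right; left].
    + by apply/eqP; rewrite half_eq.
  - exists ((i + j + 1)%:R / (p + q)%:R, (gy, dS p q i j)); split => //=.
    + by apply: (@inC_cs _ _ i j); [| |right; right].
    + by apply/eqP; rewrite half_eq // addn_gt0 p0.
apply: (sym_word st E _ c1 c2).
by rewrite memE.
Qed.

Unset Implicit Arguments.

Theorem proposition3p4 (t : option rat)
  (ht : if t is Some r then 0 <= r else true) :
  exists (w : word) (a : gen), omega t = w ++ (a, true) :: inv_word w.
Proof.
case: t ht => [r|] /=; last by move=> _; exists [::], gz.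
case: eqP => [_ _|r0 hr]; first by exists [::], gx.
apply: main_pq.
- by rewrite absz_gt0 numq_eq0; apply/eqP.
- by rewrite absz_gt0 denq_neq0.
- exact: coprime_num_den.
Qed.
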